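(* Let $n\ge2$, $m,m'\in\mathbb{Z}$ with $\gcd(n,m)=1$ and $\gcd(n,m+m')=1$. Then, as rational functions of $s$, $$(1-s)\,\zeta(s,\sigma_{n,m+m'};\beta_{n,q})=(1-q^{m'}s)\,\zeta(q^{m'}s,\sigma_{n,m};\beta_{n,q}).$$
   Context: $\sigma_{n,m}:=(\sigma_1\cdots\sigma_{n-1})^m\in\mathrm{B}_n$ (braid group with standard generators $\sigma_i$). The Burau representation $\beta_{n,q}$ is given by $\beta_{n,q}(\sigma_i)=I_{i-1}\oplus\begin{pmatrix}1-q&1\\ q&0\end{pmatrix}\oplus I_{n-i-1}$ over $\mathbb{Z}[q^{\pm1}]$, and $\zeta(s,\sigma;\beta_{n,q}):=\det(I_n-\beta_{n,q}(\sigma)s)^{-1}$. *)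

(* Defs.v *)
From HB Require Import structures.
From mathcomp Require Import all_boot all_order all_algebra.
Set Implicit Arguments. Unset Strict Implicit. Unset Printing Implicit Defensive.
Import Order.TTheory GRing.Theory Num.Theory.
Local Open Scope ring_scope.

(* Burau matrix of sigma_i (1 <= i <= n-1), 0-indexed rows/cols:
   block [[1-q, 1],[q, 0]] at positions (i-1, i), identity elsewhere. *)
Definition burau_gen (R : nzRingType) (n : nat) (q : R) (i : nat) : 'M[R]_n :=
  \matrix_(a < n, b < n)
    if (a == i.-1 :> nat) && (b == i.-1 :> nat) then 1 - q
    else if (a == i.-1 :> nat) && (b == i :> nat) then 1
    else if (a == i :> nat) && (b == i.-1 :> nat) then q
    else if (a == i :> nat) && (b == i :> nat) then 0
    else (a == b)%:R.

Definition burau_delta (R : nzRingType) (n : nat) (q : R) : 'M[R]_n :=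
  foldr (fun i A => burau_gen n q i *m A) 1%:M (iota 1 n.-1).

Definition mxpowz (R : comUnitRingType) (n : nat) (A : 'M[R]_n) (m : int)
  : 'M[R]_n :=
  match m with
  | Posz k => iter k (mulmx A) 1%:M
  | Negz k => invmx (iter k.+1 (mulmx A) 1%:M)
  end.

(* beta_{n,q}(sigma_{n,m}) = (beta(sigma_1 ... sigma_{n-1}))^m *)
Definition burau_sigma (R : comUnitRingType) (n : nat) (q : R) (m : int)
  : 'M[R]_n := mxpowz (burau_delta n q) m.

Definition zeta (F : fieldType) (n : nat) (t : F) (B : 'M[F]_n) : F :=
  (\det (1%:M - t *: B))^-1.

(* Q(q): the fraction field of Z[q], containing Z[q^{+-1}] *)
Definition Qq : fieldType := {fraction {poly int}}.
Definition qv : Qq := tofrac 'X.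
Definition Qqs : fieldType := {fraction {poly Qq}}.
Definition sv : Qqs := tofrac 'X.
Definition qs : Qqs := tofrac (qv%:P).

(* Main.v *)
Require Import Defs.
From HB Require Import structures.
From mathcomp Require Import all_boot all_order all_algebra.
From mathcomp Require Import all_fingroup zify ring.
Set Implicit Arguments. Unset Strict Implicit. Unset Printing Implicit Defensive.
Import Order.TTheory GRing.Theory Num.Theory.
Local Open Scope ring_scope.


Section Perm.
Variable N : nat.
Local Notation n := N.+2.

Definition shf (c : 'I_n) (x : 'I_n) : 'I_n := x - c.
Lemma shf_inj c : injective (shf c).
Proof. by move=> x y; rewrite /shf => /addIr. Qed.
Definition sh c : 'S_n := perm (@shf_inj c).

Lemma shD c d : sh (c + d) = (sh c * sh d)%g.
Proof. by apply/permP => x; rewrite permM !permE /shf opprD addrA. Qed.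
Lemma sh0 : sh 0 = 1%g.
Proof. by apply/permP => x; rewrite perm1 permE /shf subr0. Qed.

Definition mulf (c : 'I_n) (x : 'I_n) : 'I_n := x * c.
Lemma mulf_inj c : c \is a GRing.unit -> injective (mulf c).
Proof. by move=> Uc x y; rewrite /mulf => /(mulIr Uc). Qed.

Lemma sh_conj c (Uc : c \is a GRing.unit) :
  sh c = ((perm (mulf_inj Uc))^-1 * sh 1%R * perm (mulf_inj Uc))%g.
Proof.
apply/permP => x; rewrite !permM.
set t := perm (mulf_inj Uc).
have Ht z : t z = z * c by rewrite permE.
set y := (t^-1)%g x.
have -> : x = y * c by rewrite -Ht /y permKV.
by rewrite Ht !permE /shf mulrBl mul1r.
Qed.
End Perm.


Section Mat.
Variable F : fieldType.
Variable N : nat.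
Local Notation n := N.+2.

Definition ones : 'rV[F]_n := const_mx 1.
Definition onec : 'cV[F]_n := const_mx 1.
Definition e0 : 'cV[F]_n := delta_mx 0 0.
Definition e0r : 'rV[F]_n := delta_mx 0 0.

Lemma ones_perm (s : 'S_n) : ones *m perm_mx s = ones.
Proof. by rewrite -[s]invgK -col_permE col_perm_const. Qed.
Lemma perm_onec (s : 'S_n) : perm_mx s *m onec = onec.
Proof. by rewrite -row_permE row_perm_const. Qed.

Lemma ones_e0 : ones *m e0 = 1%:M.
Proof.
apply/matrixP => i j; rewrite !ord1 !mxE (bigD1 0) //= big1 => [|k /negbTE nk].
  by rewrite !mxE !eqxx /= mulr1 addr0.
by rewrite !mxE nk mulr0.
Qed.

Lemma e0r_e0 : e0r *m e0 = 1%:M.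
Proof. by rewrite mul_delta_mx; apply/matrixP => i j; rewrite !ord1 !mxE. Qed.

Lemma det_rank1 (A B : 'M[F]_n) (w : 'cV[F]_n) (al be : F) :
  A = B + w *m ones -> ones *m A = al *: ones -> ones *m B = be *: ones ->
  be * \det A = al * \det B.
Proof.
move=> AB HA HB.
pose X := e0 *m (ones - e0r).
have XX : X *m X = 0.
  have r0 : (ones - e0r) *m e0 = 0 by rewrite mulmxBl ones_e0 e0r_e0 subrr.
  by rewrite /X !mulmxA -(mulmxA e0) r0 mulmx0 mul0mx.
pose L := 1%:M + X; pose Li := 1%:M - X.
have LLi : L *m Li = 1%:M.
  by rewrite /Li mulmxBr mulmx1 -/X /L mulmxDl mul1mx XX addr0 addrK.
have dL : \det L * \det Li = 1 by rewrite -det_mulmx LLi det1.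
have onesLi : ones *m Li = e0r.
  rewrite /Li /X mulmxBr mulmx1 mulmxA ones_e0 mul1mx.
  by rewrite opprB addrC subrK.
have e0rL : e0r *m L = ones.
  rewrite /L /X mulmxDr mulmx1 mulmxA e0r_e0 mul1mx.
  by rewrite addrC subrK.
have key (C : 'M[F]_n) c : ones *m C = c *: ones ->
   \det C = c * cofactor (L *m C *m Li) 0 0.
  move=> HC.
  have -> : \det C = \det (L *m C *m Li).
    by rewrite !det_mulmx mulrAC dL mul1r.
  rewrite (expand_det_row _ 0) (bigD1 0) //= big1 ?addr0 => [|j nj].
  - congr (_ * _).
    have : row 0 (L *m C *m Li) = c *: e0r.
      by rewrite rowE -/e0r !mulmxA e0rL HC -scalemxAl onesLi.
    by move/matrixP => /(_ 0 0); rewrite !mxE eqxx mulr1.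
  - have : row 0 (L *m C *m Li) = c *: e0r.
      by rewrite rowE -/e0r !mulmxA e0rL HC -scalemxAl onesLi.
    move/matrixP => /(_ 0 j); rewrite !mxE (negbTE nj) mulr0 => ->.
    by rewrite mul0r.
rewrite (key A al HA) (key B be HB) mulrCA; congr (_ * _); congr (_ * _).
rewrite /cofactor; congr (_ * _); congr (\det _).
have -> : L *m A *m Li = L *m B *m Li + (L *m w) *m e0r.
  by rewrite AB (mulmxDr L) (mulmxDl (L *m B)) -onesLi !mulmxA.
apply/matrixP => i j; rewrite !mxE big_ord1 !mxE /=.
by rewrite mulr0 addr0.
Qed.
End Mat.


Section Delta.
Variable F : fieldType.
Variable N : nat.
Local Notation n := N.+2.
Variable q : F.

Lemma sh1E (a b : 'I_n) :
  (sh 1 a == b) = if a == 0 :> nat then b == n.-1 :> nat else a == b.+1 :> nat.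
Proof.
rewrite permE /shf subr_eq -val_eqE /=.
rewrite (modn_small (_ : 1 < n)%N) // addn1.
have hb := ltn_ord b; have ha := ltn_ord a.
have [lt|ge] := ltnP b.+1 n.
  by rewrite modn_small //; case: ifP => [/eqP a0|a0] //; apply/idP/idP => /eqP; lia.
have -> : b.+1 = n by lia.
by rewrite modnn; case: ifP => [/eqP a0|/negbT a0]; apply/idP/idP => /eqP; lia.
Qed.

Lemma sum_deltan (f : 'I_n -> F) (x : nat) (hx : (x < n)%N) :
  \sum_c f c * ((c == x :> nat)%:R) = f (Ordinal hx).
Proof.
rewrite (bigD1 (Ordinal hx)) //= eqxx mulr1 big1 ?addr0 // => c.
by rewrite -val_eqE /= => /negbTE ->; rewrite mulr0.
Qed.

Lemma mul_gen (A : 'M[F]_n) k (hk : (k.+1 < n)%N) (a b : 'I_n) :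
  (A *m burau_gen n q k.+1) a b =
  if b == k :> nat then (1 - q) * A a (Ordinal (ltnW hk)) + q * A a (Ordinal hk)
  else if b == k.+1 :> nat then A a (Ordinal (ltnW hk)) else A a b.
Proof.
rewrite mxE; case: ifP => [/eqP bk|bk].
  rewrite -[in RHS](sum_deltan (fun c => A a c) (ltnW hk)).
  rewrite -[in RHS](sum_deltan (fun c => A a c) hk).
  rewrite !mulr_sumr -big_split /=; apply: eq_bigr => c _.
  rewrite mxE /= bk eqxx /= (_ : (k == k.+1)%N = false); last by lia.
  have hc := ltn_ord c.
  do 2 case: eqP => /= ? //; try lia. all: rewrite ?andbF ?andbT /=. all: try (case: (c =P b) => [/(congr1 val) /= ?|?]; try lia). all: rewrite ?mulr1n ?mulr0n; try ring.

case: ifP => [/eqP bk1|bk1].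
  rewrite -[in RHS](sum_deltan (fun c => A a c) (ltnW hk)).
  apply: eq_bigr => c _.
  rewrite mxE /= bk1 eqxx /= (_ : (k.+1 == k)%N = false); last by lia.
  have hc := ltn_ord c.
  do 2 case: eqP => /= ? //; try lia. all: rewrite ?andbF ?andbT /=. all: try (case: (c =P b) => [/(congr1 val) /= ?|?]; try lia). all: rewrite ?mulr1n ?mulr0n; try ring.
rewrite (eq_bigr (fun c => A a c * ((c == b :> nat)%:R))).
  by rewrite (sum_deltan _ (ltn_ord b)); congr (A a _); apply: val_inj.
move=> c _; rewrite mxE /= bk bk1 !andbF.
by [].
Qed.

Definition Gk k := foldr (fun i A => burau_gen n q i *m A) 1%:M (iota 1 k).

Lemma foldr_acc s (A : 'M[F]_n) :
  foldr (fun i A => burau_gen n q i *m A) A s =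
  foldr (fun i A => burau_gen n q i *m A) 1%:M s *m A.
Proof. by elim: s => [|i s IH] /=; rewrite ?mul1mx // IH mulmxA. Qed.

Lemma Gk_S k : Gk k.+1 = Gk k *m burau_gen n q k.+1.
Proof.
by rewrite /Gk -[k.+1]addn1 iotaD foldr_cat /= mulmx1 (foldr_acc _ (burau_gen n q _)) addnC.
Qed.

Definition Fk k (a b : nat) : F :=
  if a == 0%N then (if (b < k)%N then 1 - q else if b == k then 1 else 0)
  else if (a <= k)%N then (if b == a.-1 then q else 0) else (a == b)%:R.

Lemma Gk_E k : (k < n)%N -> Gk k = \matrix_(a, b) Fk k a b.
Proof.
elim: k => [_|k IH hk].
  apply/matrixP => a b; rewrite /Gk /= !mxE /Fk.
  rewrite -val_eqE /=; case: ifP => [/eqP ->|a0]; last by rewrite leqn0 a0.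
  by rewrite eq_sym; case: eqP.

apply/matrixP => a b; rewrite Gk_S mul_gen IH ?(ltnW hk) // !mxE /Fk /=.
have ha := ltn_ord a; have hb := ltn_ord b.
rewrite !ltnn !eqxx.
do ! case: ifP => ?; do ? case: eqP => ?; rewrite ?mulr1n ?mulr0n;
  try (exfalso; lia); try ring.
Qed.

Lemma delta_E : burau_delta n q = q *: perm_mx (sh 1) + (1 - q) *: (e0 F N *m ones F N).
Proof.
rewrite /burau_delta -/(Gk N.+1) Gk_E //.
apply/matrixP => a b; rewrite !mxE big_ord1 !mxE sh1E /Fk /=.
have ha := ltn_ord a; have hb := ltn_ord b.
rewrite eqxx andbT mulr1 -val_eqE /=.
do ! case: ifP => ?; do ? case: eqP => ?; rewrite ?mulr1n ?mulr0n;
  try (exfalso; lia); try ring.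
Qed.
End Delta.


Section Pow.
Variable F : fieldType.
Variable N : nat.
Local Notation n := N.+2.
Local Notation ones := (ones F N).
Local Notation e0 := (e0 F N).
Local Notation Pm c := (perm_mx (sh c) : 'M[F]_n).

Lemma PmD (c d : 'I_n) : Pm (c + d) = Pm c *m Pm d.
Proof. by rewrite shD perm_mxM. Qed.
Lemma Pm0 : Pm 0 = 1%:M.
Proof. by rewrite sh0 perm_mx1. Qed.

Lemma inv_form (r : F) (hr : r != 0) (c : 'I_n) (w : 'cV[F]_n) :
  ones *m (r *: Pm c + w *m ones) = ones ->
  (r *: Pm c + w *m ones) *m (r^-1 *: Pm (-c) + ((- r^-1) *: (Pm (-c) *m w)) *m ones)
  = 1%:M.
Proof.
move=> H.
have Hw : (ones *m w) *m ones = (1 - r) *: ones.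
  move: H; rewrite mulmxDr -scalemxAr ones_perm mulmxA => H.
  by apply: (addrI (r *: ones)); rewrite H -scalerDl addrC subrK scale1r.
have PQ : Pm c *m Pm (-c) = 1%:M by rewrite -PmD subrr Pm0.
have T2 : w *m ones *m Pm (-c) = w *m ones by rewrite -mulmxA ones_perm.
have T3 : Pm c *m (Pm (-c) *m w *m ones) = w *m ones by rewrite !mulmxA PQ mul1mx.
have T4 : w *m ones *m (Pm (-c) *m w *m ones) = (1 - r) *: (w *m ones).
  by rewrite !mulmxA -(mulmxA w) ones_perm -(mulmxA w) -(mulmxA w) Hw scalemxAr.
rewrite mulmxDr !mulmxDl -!scalemxAr -!scalemxAl -!(scalemxAr (- r^-1)) T2 T3 T4 PQ !scalerA.
rewrite mulVf // scale1r -addrA -[RHS]addr0; congr (_ + _).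
rewrite -!scalerDl (_ : _ + _ = 0) ?scale0r //.
by field.
Qed.

Lemma ones_e0' : ones *m e0 = 1%:M.
Proof. exact: ones_e0. Qed.

Lemma ones_D (q : F) : ones *m burau_delta n q = ones.
Proof.
rewrite delta_E mulmxDr -!scalemxAr ones_perm mulmxA ones_e0 mul1mx.
by rewrite -scalerDl addrC subrK scale1r.
Qed.

Lemma ones_iter (q : F) j : ones *m iter j (mulmx (burau_delta n q)) 1%:M = ones.
Proof.
elim: j => [|j IH] /=; first by rewrite mulmx1.
by rewrite mulmxA ones_D.
Qed.

Lemma pow_nat (q : F) (j : nat) : exists w : 'cV[F]_n,
  iter j (mulmx (burau_delta n q)) 1%:M = q ^+ j *: Pm (j%:R) + w *m ones.
Proof.
elim: j => [|j [w IH]] /=.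
  by exists 0; rewrite mul0mx addr0 expr0 scale1r Pm0.
exists ((q ^+ j * (1 - q)) *: e0 + burau_delta n q *m w).
rewrite IH mulmxDr mulmxA -scalemxAr.
have -> : burau_delta n q *m Pm (j%:R) =
    q *: Pm (j.+1)%:R + (1 - q) *: (e0 *m ones).
  rewrite delta_E mulmxDl -!scalemxAl -PmD -mulmxA ones_perm.
  by rewrite -natr1 (addrC 1).
rewrite (scalerDr (q ^+ j)) !scalerA -exprSr -addrA; congr (_ + _).
by rewrite mulmxDl -scalemxAl.
Qed.

Lemma pow_form (q : F) (hq : q != 0) (k : int) : exists w : 'cV[F]_n,
  mxpowz (burau_delta n q) k = q ^ k *: Pm (k%:~R) + w *m ones
  /\ ones *m mxpowz (burau_delta n q) k = ones.
Proof.
case: k => j /=.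
  have [w E] := pow_nat q j.
  by exists w; split; rewrite ?ones_iter // E.
have [w E] := pow_nat q j.+1.
set X := iter j.+1 _ _ in E *.
have H1 := ones_iter q j.+1; rewrite -/X E in H1.
have qj : q ^+ j.+1 != 0 by rewrite expf_neq0.
have XY := inv_form qj H1; rewrite -E in XY.
have [uX _] := mulmx1_unit XY.
have iX : invmx X = (q ^+ j.+1)^-1 *: Pm (- (j.+1)%:R) +
   (- (q ^+ j.+1)^-1 *: (Pm (- (j.+1)%:R) *m w)) *m ones.
  by rewrite -[LHS]mulmx1 -XY mulmxA mulVmx // mul1mx.
exists (- (q ^+ j.+1)^-1 *: (Pm (- (j.+1)%:R) *m w)); split.
  by rewrite iX NegzE.
rewrite -{1}(ones_iter q j.+1) -/X -mulmxA mulmxV //.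
by rewrite mulmx1.
Qed.
End Pow.


Section Fin.
Variable F : fieldType.
Variable N : nat.
Local Notation n := N.+2.
Local Notation ones := (ones F N).
Local Notation Pm c := (perm_mx (sh c) : 'M[F]_n).

Lemma main_det (q t : F) (hq : q != 0) (k : int) :
  (1 - t * q ^ k) * \det (1%:M - t *: mxpowz (burau_delta n q) k)
  = (1 - t) * \det (1%:M - (t * q ^ k) *: Pm (k%:~R)).
Proof.
have [w [E H]] := @pow_form F N q hq k.
apply: (@det_rank1 F N _ _ (- t *: w)).
- rewrite E scalerDr scalerA -addrA; congr (_ + _).
  by rewrite opprD; congr (_ + _); rewrite -scalemxAl scaleNr.
- by rewrite mulmxBr mulmx1 -scalemxAr H -[X in X - _]scale1r -scalerBl.
- by rewrite mulmxBr mulmx1 -scalemxAr ones_perm -[X in X - _]scale1r -scalerBl.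
Qed.

Lemma det_conj (u : F) (c : 'I_n) (Uc : c \is a GRing.unit) :
  \det (1%:M - u *: Pm c) = \det (1%:M - u *: Pm 1).
Proof.
rewrite (sh_conj Uc) !perm_mxM.
set T := perm (mulf_inj Uc).
have TT : perm_mx (T^-1)%g *m perm_mx T = 1%:M :> 'M[F]_n.
  by rewrite -perm_mxM mulVg perm_mx1.
have -> : 1%:M - u *: (perm_mx (T^-1)%g *m Pm 1 *m perm_mx T) =
   perm_mx (T^-1)%g *m (1%:M - u *: Pm 1) *m perm_mx T.
  by rewrite mulmxBr mulmxBl mulmx1 TT -scalemxAr -scalemxAl.
rewrite !det_mulmx mulrAC -det_mulmx TT det1 mul1r.
by [].
Qed.

Lemma unit_int (k : int) : coprime n `|k|%N -> (k%:~R : 'I_n) \is a GRing.unit.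
Proof.
case: k => j /= cj.
  by rewrite -pmulrn (@unitZpE n j).
by rewrite NegzE mulrNz unitrN -pmulrn (@unitZpE n j.+1).
Qed.
End Fin.


Lemma qv_neq0 : qv != 0.
Proof. by rewrite /qv tofrac_eq0 polyX_eq0. Qed.

Lemma tofracC_inv (c : Qq) : c != 0 -> (tofrac (c%:P) : Qqs)^-1 = tofrac (c^-1)%:P.
Proof.
move=> c0.
have x0 : (tofrac (c%:P) : Qqs) != 0 by rewrite tofrac_eq0 polyC_eq0.
apply: (mulfI x0); rewrite mulfV // -tofracM -polyCM mulfV //.
Qed.

Lemma qsX (k : int) : exists c : Qq, c != 0 /\ qs ^ k = tofrac (c%:P).
Proof.
have qj j : qs ^+ j = tofrac ((qv ^+ j)%:P).
  by rewrite /qs -tofracXn -(rmorphXn (@polyC Qq)).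
case: k => j.
  by exists (qv ^+ j); split; [rewrite expf_neq0 // qv_neq0 | exact: qj].
exists ((qv ^+ j.+1)^-1); split; first by rewrite invr_eq0 expf_neq0 // qv_neq0.
have -> : qs ^ Negz j = (qs ^+ j.+1)^-1 by [].
by rewrite qj tofracC_inv // expf_neq0 // qv_neq0.
Qed.

Lemma one_sub_neq0 (k : int) : 1 - qs ^ k * sv != 0.
Proof.
have [c [c0 ->]] := qsX k.
rewrite /sv -tofracM -tofrac1 -tofracB tofrac_eq0.
apply/negP => /eqP H; have := congr1 (fun p : {poly Qq} => p`_0) H.
by rewrite /= coef0 coefB coefC coefCM coefX mulr0 subr0 => /eqP; rewrite oner_eq0.
Qed.


Lemma fin_alg (F : fieldType) (a b c d1 d2 X : F) : a != 0 -> b != 0 -> c != 0 ->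
  c * d1 = a * X -> c * d2 = b * X -> a / d1 = b / d2.
Proof.
move=> a0 b0 c0 E1 E2.
have -> : d1 = a * X / c by rewrite -E1 mulrC mulrA mulVf ?mul1r.
have -> : d2 = b * X / c by rewrite -E2 mulrC mulrA mulVf ?mul1r.
by rewrite !invfM invrK !mulrA mulfV // mulfV.
Qed.

Arguments fin_alg {F a b c d1 d2 X}.
Unset Implicit Arguments.

Theorem corollary3p2 (n : nat) (m m' : int) :
  (2 <= n)%N ->
  coprime n (absz m) ->
  coprime n (absz (m + m')) ->
  (1 - sv) * zeta sv (burau_sigma n qs (m + m'))
  = (1 - qs ^ m' * sv) * zeta (qs ^ m' * sv) (burau_sigma n qs m).
Proof.
move=> hn cm cmm.
have [N En] : exists N, n = N.+2 by exists n.-2; lia.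
subst n.

have hq : qs != 0 by rewrite /qs tofrac_eq0 polyC_eq0 qv_neq0.
have E1 := @main_det Qqs N qs sv hq (m + m').
rewrite (det_conj _ (unit_int cmm)) in E1.
have E2 := @main_det Qqs N qs (qs ^ m' * sv) hq m.
rewrite (det_conj _ (unit_int cm)) in E2.
have ee : qs ^ m' * sv * qs ^ m = sv * qs ^ (m + m').
  by rewrite exprzDr ?unitfE //; ring.
rewrite ee in E2.
rewrite /zeta /burau_sigma.
have a0 : 1 - sv != 0 by have := one_sub_neq0 0; rewrite expr0z mul1r.
have b0 := one_sub_neq0 m'.
have c0 : 1 - sv * qs ^ (m + m') != 0 by rewrite mulrC one_sub_neq0.
exact: (fin_alg a0 b0 c0 E1 E2).
Qed.
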